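(* Let $h_6$ be the real two-photon Lie algebra. A Lie bialgebra structure $\delta$ on $h_6$ satisfies $\delta(N)=0$ if and only if there exist real numbers $c_1,c_2$ such that $\delta(X)=[1\otimes X+X\otimes 1,\,r]$ for all $X\in h_6$, with $$r=c_1\,N\wedge M+c_2\,A_+\wedge A_- .$$ Explicitly, $\delta(N)=\delta(M)=0$, $\delta(A_+)=-(c_1+c_2)A_+\wedge M$, $\delta(A_-)=(c_1-c_2)A_-\wedge M$, $\delta(B_+)=-2c_1B_+\wedge M$, $\delta(B_-)=2c_1B_-\wedge M$. Moreover, for this $r$ one has $[[r,r]]=-c_2^2\,A_+\wedge A_-\wedge M$, so $r$ is a solution of the classical Yang–Baxter equation (non-standard case) if and only if $c_2=0$, and is standard (nonzero Schouten bracket, satisfying only the modified classical Yang–Baxter equation) if and only if $c_2\neq 0$.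
   Context: The two-photon Lie algebra $h_6$ is the real Lie algebra with basis $\{N,A_+,A_-,B_+,B_-,M\}$ and brackets $[N,A_+]=A_+$, $[N,A_-]=-A_-$, $[A_-,A_+]=M$, $[N,B_+]=2B_+$, $[N,B_-]=-2B_-$, $[B_-,B_+]=4N+2M$, $[A_+,B_-]=-2A_-$, $[A_+,B_+]=0$, $[A_-,B_+]=2A_+$, $[A_-,B_-]=0$, and $M$ central. A Lie bialgebra structure on a Lie algebra $g$ is a linear map $\delta:g\to g\otimes g$ which is a 1-cocycle, i.e. $\delta([X,Y])=[\delta(X),1\otimes Y+Y\otimes 1]+[1\otimes X+X\otimes 1,\delta(Y)]$, and whose dual map $g^*\otimes g^*\to g^*$ is a Lie bracket. For $r\in g\wedge g$, $r=\sum r^{ij}X_i\otimes X_j$, the Schouten bracket is $[[r,r]]=[r_{12},r_{13}]+[r_{12},r_{23}]+[r_{13},r_{23}]$, with $r_{12}=\sum r^{ij}X_i\otimes X_j\otimes 1$, $r_{13}=\sum r^{ij}X_i\otimes 1\otimes X_j$, $r_{23}=\sum r^{ij}1\otimes X_i\otimes X_j$; the classical Yang–Baxter equation is $[[r,r]]=0$. Here $X\wedge Y=X\otimes Y-Y\otimes X$. *)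

(* Defs.v *)
From HB Require Import structures.
From mathcomp Require Import all_boot all_order all_algebra.
Set Implicit Arguments. Unset Strict Implicit. Unset Printing Implicit Defensive.
Import Order.TTheory GRing.Theory Num.Theory.
Local Open Scope ring_scope.

(* The two-photon Lie algebra h6 over a real field R, in coordinates with
   respect to the ordered basis (X_0,...,X_5) = (N, A+, A-, B+, B-, M).
   Elements of h6 (x) h6 : matrices 'M[R]_6, t i j = coefficient of X_i (x) X_j. *)

Section H6.
Variable R : realFieldType.

(* structure constants: cst i j k = coefficient of X_k in [X_i, X_j] *)
Definition cst_nat (i j k : nat) : R :=
  match i, j, k with
  | 0, 1, 1 => 1 | 1, 0, 1 => -1            (* [N,A+] = A+ *)
  | 0, 2, 2 => -1 | 2, 0, 2 => 1            (* [N,A-] = -A- *)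
  | 2, 1, 5 => 1 | 1, 2, 5 => -1            (* [A-,A+] = M *)
  | 0, 3, 3 => 2 | 3, 0, 3 => -2            (* [N,B+] = 2B+ *)
  | 0, 4, 4 => -2 | 4, 0, 4 => 2            (* [N,B-] = -2B- *)
  | 4, 3, 0 => 4 | 3, 4, 0 => -4            (* [B-,B+] = 4N + 2M *)
  | 4, 3, 5 => 2 | 3, 4, 5 => -2
  | 1, 4, 2 => -2 | 4, 1, 2 => 2            (* [A+,B-] = -2A- *)
  | 2, 3, 1 => 2 | 3, 2, 1 => -2            (* [A-,B+] = 2A+ *)
  | _, _, _ => 0                            (* all other brackets vanish, M central *)
  end.

Definition cst (i j k : 'I_6) : R := cst_nat i j k.

Definition h6 := 'rV[R]_6.
Definition h6t2 := 'M[R]_6.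
Definition h6t3 := {ffun 'I_6 * 'I_6 * 'I_6 -> R}.

Definition bas (i : 'I_6) : h6 := delta_mx 0 i.
Definition eN  : h6 := bas (inord 0).
Definition eAp : h6 := bas (inord 1).
Definition eAm : h6 := bas (inord 2).
Definition eBp : h6 := bas (inord 3).
Definition eBm : h6 := bas (inord 4).
Definition eM  : h6 := bas (inord 5).

Definition br (x y : h6) : h6 :=
  \row_k \sum_i \sum_j x 0 i * y 0 j * cst i j k.

Definition adm (x : h6) : 'M[R]_6 := \matrix_(i, k) br x (bas i) 0 k.

Definition tens (x y : h6) : h6t2 := x^T *m y.
Definition wedge (x y : h6) : h6t2 := tens x y - tens y x.

Definition tens3 (x y z : h6) : h6t3 :=
  [ffun t : 'I_6 * 'I_6 * 'I_6 => x 0 t.1.1 * y 0 t.1.2 * z 0 t.2].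
Definition wedge3 (x y z : h6) : h6t3 :=
  [ffun t => tens3 x y z t + tens3 y z x t + tens3 z x y t
           - tens3 y x z t - tens3 x z y t - tens3 z y x t].

(* action of x on g (x) g : [1 (x) x + x (x) 1, t] *)
Definition ad2 (x : h6) (t : h6t2) : h6t2 := (adm x)^T *m t + t *m adm x.

Definition ad3 (x : h6) (T : h6t3) : h6t3 :=
  [ffun t : 'I_6 * 'I_6 * 'I_6 =>
     let: (a, b, c) := t in
       \sum_i adm x i a * T (i, b, c)
     + \sum_i adm x i b * T (a, i, c)
     + \sum_i adm x i c * T (a, b, i)].

(* Schouten bracket [[r,r]] = [r12,r13] + [r12,r23] + [r13,r23] *)
Definition schouten (r : h6t2) : h6t3 :=
  [ffun t : 'I_6 * 'I_6 * 'I_6 =>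
     let: (a, b, c) := t in
       \sum_i \sum_k r i b * r k c * cst i k a
     + \sum_j \sum_k r a j * r k c * cst j k b
     + \sum_j \sum_l r a j * r b l * cst j l c].

(* A linear map delta : h6 -> h6 (x) h6, given by its values D i on the basis *)
Definition delta_of (D : 'I_6 -> h6t2) (x : h6) : h6t2 := \sum_i x 0 i *: D i.

Definition cocycle (D : 'I_6 -> h6t2) : Prop :=
  forall x y : h6,
    delta_of D (br x y) = ad2 x (delta_of D y) - ad2 y (delta_of D x).

(* dual map g* (x) g* -> g*, (f, g) |-> (X |-> (f (x) g)(delta X)),
   with g* identified with row vectors via the dual basis *)
Definition dual_br (D : 'I_6 -> h6t2) (f g : h6) : h6 :=
  \row_k \sum_i \sum_j f 0 i * g 0 j * D k i j.

Definition dual_is_Lie (D : 'I_6 -> h6t2) : Prop :=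
  (forall f : h6, dual_br D f f = 0) /\
  (forall f g h : h6,
     dual_br D f (dual_br D g h) + dual_br D g (dual_br D h f)
     + dual_br D h (dual_br D f g) = 0).

Definition lie_bialgebra (D : 'I_6 -> h6t2) : Prop :=
  cocycle D /\ dual_is_Lie D.

Definition r_of (c1 c2 : R) : h6t2 := c1 *: wedge eN eM + c2 *: wedge eAp eAm.

End H6.

(* Main.v *)
Require Import Defs.
From HB Require Import structures.
From mathcomp Require Import all_boot all_order all_algebra.
From mathcomp Require Import ring lra.
Set Implicit Arguments. Unset Strict Implicit. Unset Printing Implicit Defensive.
Import Order.TTheory GRing.Theory Num.Theory.
Local Open Scope ring_scope.

Notation o0 := (@Ordinal 6 0 isT).
Notation o1 := (@Ordinal 6 1 isT).
Notation o2 := (@Ordinal 6 2 isT).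
Notation o3 := (@Ordinal 6 3 isT).
Notation o4 := (@Ordinal 6 4 isT).
Notation o5 := (@Ordinal 6 5 isT).

Lemma ord6P (P : 'I_6 -> Prop) :
  P o0 -> P o1 -> P o2 -> P o3 -> P o4 -> P o5 -> forall i, P i.
Proof.
move=> H0 H1 H2 H3 H4 H5 [[|[|[|[|[|[|i]]]]]] Hi];
  try (by rewrite (bool_irrelevance Hi isT)).
done.
Qed.

Section S.
Variable R : realFieldType.

Lemma sum6 (F : 'I_6 -> R) :
  \sum_(i < 6) F i = F o0 + F o1 + F o2 + F o3 + F o4 + F o5.
Proof.
rewrite !big_ord_recl big_ord0 addr0 !addrA /=.
by congr (_ + _ + _ + _ + _ + _); congr F; apply: val_inj.
Qed.

Lemma basE (i j : 'I_6) : bas R i 0 j = (j == i)%:R.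
Proof. by rewrite /bas mxE eqxx. Qed.

Lemma sum_bas (F : 'I_6 -> R) a : \sum_i bas R a 0 i * F i = F a.
Proof.
rewrite (bigD1 a) //= basE eqxx mul1r big1 ?addr0 // => i /negbTE Hi.
by rewrite basE Hi mul0r.
Qed.

Lemma deltaE (D : 'I_6 -> h6t2 R) x a b : delta_of D x a b = \sum_i x 0 i * D i a b.
Proof. by rewrite /delta_of summxE; apply: eq_bigr => i _; rewrite mxE. Qed.

Lemma brE (x y : h6 R) k : br x y 0 k = \sum_i \sum_j x 0 i * y 0 j * cst R i j k.
Proof. by rewrite mxE. Qed.

Lemma br_bas x y k : br (bas R x) (bas R y) 0 k = cst R x y k.
Proof.
rewrite brE (eq_bigr (fun i => bas R x 0 i * \sum_j bas R y 0 j * cst R i j k)).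
  by rewrite sum_bas sum_bas.
by move=> i _; rewrite mulr_sumr; apply: eq_bigr => j _; rewrite mulrA.
Qed.

Lemma admE (x : h6 R) i k : adm x i k = \sum_m x 0 m * cst R m i k.
Proof.
rewrite mxE brE; apply: eq_bigr => m _.
rewrite (eq_bigr (fun j => bas R i 0 j * (x 0 m * cst R m j k))) ?sum_bas //.
by move=> j _; ring.
Qed.

Lemma admB a i k : adm (bas R a) i k = cst R a i k.
Proof. by rewrite admE sum_bas. Qed.

Lemma ad2E (x : h6 R) (t : h6t2 R) a b :
  ad2 x t a b = \sum_i adm x i a * t i b + \sum_j t a j * adm x j b.
Proof.
rewrite /ad2 !mxE; congr (_ + _); apply: eq_bigr => i _; by rewrite !mxE.
Qed.

Lemma dualE (D : 'I_6 -> h6t2 R) f g k :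
  dual_br D f g 0 k = \sum_i f 0 i * \sum_j g 0 j * D k i j.
Proof.
rewrite mxE; apply: eq_bigr => i _; rewrite mulr_sumr; apply: eq_bigr => j _.
by rewrite mulrA.
Qed.

Lemma delta_bas (D : 'I_6 -> h6t2 R) k : delta_of D (bas R k) = D k.
Proof. by apply/matrixP => a b; rewrite deltaE sum_bas. Qed.

Lemma coc_entry (D : 'I_6 -> h6t2 R) : cocycle D -> forall x y a b,
  \sum_k cst R x y k * D k a b =
  (\sum_i cst R x i a * D y i b + \sum_j D y a j * cst R x j b)
  - (\sum_i cst R y i a * D x i b + \sum_j D x a j * cst R y j b).
Proof.
move=> Hco x y a b.
have := congr1 (fun m : 'M_6 => m a b) (Hco (bas R x) (bas R y)).
rewrite deltaE /=.
have -> : forall A B : 'M[R]_6, (A - B) a b = A a b - B a b by move=> A B; rewrite !mxE.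
rewrite !ad2E !delta_bas.
rewrite (eq_bigr (fun k => cst R x y k * D k a b)); last by move=> k _; rewrite br_bas.
move=> ->; congr (_ + _ - (_ + _)); apply: eq_bigr => i _; by rewrite admB.
Qed.

Lemma skew (D : 'I_6 -> h6t2 R) : dual_is_Lie D -> forall k a b, D k a b = - D k b a.
Proof.
case=> Ha _ k a b.
have E1 : dual_br D (bas R a) (bas R a) 0 k = 0 by rewrite Ha mxE.
have E2 : dual_br D (bas R b) (bas R b) 0 k = 0 by rewrite Ha mxE.
have E3 : dual_br D (bas R a + bas R b) (bas R a + bas R b) 0 k = 0 by rewrite Ha mxE.
move: E1 E2 E3; rewrite !dualE !sum_bas.
have H2 : forall F : 'I_6 -> R, \sum_i (bas R a + bas R b) 0 i * F i = F a + F b.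
  by move=> F; rewrite (eq_bigr (fun i => bas R a 0 i * F i + bas R b 0 i * F i))
     ?big_split ?sum_bas // => i _; rewrite mxE mulrDl.
rewrite !H2 => E1 E2 E3; apply/eqP; rewrite -subr_eq0 opprK; apply/eqP.
move: E3; rewrite E1 E2; lra.
Qed.

Lemma jac (D : 'I_6 -> h6t2 R) : dual_is_Lie D -> forall a b c m,
  \sum_j D j b c * D m a j + \sum_j D j c a * D m b j + \sum_j D j a b * D m c j = 0.
Proof.
case=> _ Hj a b c m.
have E : (dual_br D (bas R a) (dual_br D (bas R b) (bas R c)) +
  dual_br D (bas R b) (dual_br D (bas R c) (bas R a)) +
  dual_br D (bas R c) (dual_br D (bas R a) (bas R b))) 0 m = 0 by rewrite Hj mxE.
have addE : forall A B : 'rV[R]_6, (A + B) 0 m = A 0 m + B 0 m by move=> A B; rewrite mxE.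
move: E; rewrite !addE !dualE !sum_bas.
have H : forall x y z, \sum_j dual_br D (bas R x) (bas R y) 0 j * D m z j
   = \sum_j D j x y * D m z j.
  by move=> x y z; apply: eq_bigr => j _; rewrite dualE !sum_bas.
by rewrite !H.
Qed.

Lemma ordE k (H : (k < 6)%N) : (inord k : 'I_6) = Ordinal H.
Proof. by apply: val_inj; rewrite /= inordK. Qed.
Lemma eNE : eN R = bas R o0. Proof. by rewrite /eN ordE. Qed.
Lemma eApE : eAp R = bas R o1. Proof. by rewrite /eAp ordE. Qed.
Lemma eAmE : eAm R = bas R o2. Proof. by rewrite /eAm ordE. Qed.
Lemma eBpE : eBp R = bas R o3. Proof. by rewrite /eBp ordE. Qed.
Lemma eBmE : eBm R = bas R o4. Proof. by rewrite /eBm ordE. Qed.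
Lemma eME : eM R = bas R o5. Proof. by rewrite /eM ordE. Qed.
Definition eE := (eNE, eApE, eAmE, eBpE, eBmE, eME).

Lemma mxsubE m n (A B : 'M[R]_(m,n)) i j : (A - B) i j = A i j - B i j.
Proof. by rewrite !mxE. Qed.
Lemma mxaddE m n (A B : 'M[R]_(m,n)) i j : (A + B) i j = A i j + B i j.
Proof. by rewrite !mxE. Qed.
Lemma mxscaleE m n c (A : 'M[R]_(m,n)) i j : (c *: A) i j = c * A i j.
Proof. by rewrite !mxE. Qed.
Lemma mx0E m n i j : (0 : 'M[R]_(m,n)) i j = 0.
Proof. by rewrite !mxE. Qed.

Lemma tensE (x y : h6 R) a b : tens x y a b = x 0 a * y 0 b.
Proof. by rewrite !mxE big_ord1 mxE. Qed.
Lemma wedgeE (x y : h6 R) a b : wedge x y a b = x 0 a * y 0 b - y 0 a * x 0 b.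
Proof. by rewrite /wedge mxsubE !tensE. Qed.

Lemma rE c1 c2 a b : r_of c1 c2 a b =
  c1 * (bas R o0 0 a * bas R o5 0 b - bas R o5 0 a * bas R o0 0 b) +
  c2 * (bas R o1 0 a * bas R o2 0 b - bas R o2 0 a * bas R o1 0 b).
Proof. by rewrite /r_of !eE mxaddE !mxscaleE !wedgeE. Qed.


Definition bf (i j : 'I_6) : R := if Nat.eqb (nat_of_ord i) (nat_of_ord j) then 1 else 0.
Lemma basE' i j : bas R i 0 j = bf j i.
Proof.
rewrite basE /bf; case: (j =P i) => [-> | H]; first by rewrite PeanoNat.Nat.eqb_refl.
by case: PeanoNat.Nat.eqb_spec => // E; case: H; apply: val_inj.
Qed.

Definition rf c1 c2 (a b : 'I_6) : R :=
  match nat_of_ord a, nat_of_ord b with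
  | 0, 5 => c1 | 5, 0 => - c1 | 1, 2 => c2 | 2, 1 => - c2 | _, _ => 0 end.

Lemma rE' c1 c2 a b : r_of c1 c2 a b = rf c1 c2 a b.
Proof. rewrite rE !basE'; elim/ord6P: a; elim/ord6P: b; rewrite /bf /rf /=; ring. Qed.

Lemma ad2rE c1 c2 x a b : ad2 (bas R x) (r_of c1 c2) a b =
  \sum_i cst R x i a * rf c1 c2 i b + \sum_j rf c1 c2 a j * cst R x j b.
Proof.
rewrite ad2E; congr (_ + _); apply: eq_bigr => i _; by rewrite admB rE'.
Qed.

Lemma wedgeB i j a b : wedge (bas R i) (bas R j) a b = bf a i * bf b j - bf a j * bf b i.
Proof. by rewrite wedgeE !basE'. Qed.



Definition sumf (F : 'I_6 -> R) := F o0 + F o1 + F o2 + F o3 + F o4 + F o5.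
Lemma sumfE F : \sum_(i < 6) F i = sumf F.
Proof. exact: sum6. Qed.

Definition solf (p q s : R) (k a b : 'I_6) : R :=
  match nat_of_ord k, nat_of_ord a, nat_of_ord b with
  | 1, 1, 5 => - p + q / 2 + s | 1, 2, 3 => - (q / 2) | 1, 3, 2 => q / 2 | 1, 5, 1 => p - q / 2 - s
  | 2, 1, 4 => - (q / 2) | 2, 2, 5 => - p | 2, 4, 1 => q / 2 | 2, 5, 2 => p
  | 3, 0, 3 => - q | 3, 3, 0 => q | 3, 3, 5 => q + s | 3, 5, 3 => - q - s
  | 4, 0, 4 => - q | 4, 4, 0 => q | 4, 4, 5 => - s | 4, 5, 4 => s
  | _, _, _ => 0 end.


Definition cstb (i j k : nat) : bool :=
  match i, j, k with
  | 0, 1, 1 | 1, 0, 1 | 0, 2, 2 | 2, 0, 2 | 2, 1, 5 | 1, 2, 5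
  | 0, 3, 3 | 3, 0, 3 | 0, 4, 4 | 4, 0, 4 | 4, 3, 0 | 3, 4, 0
  | 4, 3, 5 | 3, 4, 5 | 1, 4, 2 | 4, 1, 2 | 2, 3, 1 | 3, 2, 1 => true
  | _, _, _ => false end.

Lemma cstb0 (i j k : 'I_6) : ~~ cstb i j k -> cst R i j k = 0.
Proof. by elim/ord6P: i; elim/ord6P: j; elim/ord6P: k. Qed.

Definition fsum (P : 'I_6 -> bool) (F : 'I_6 -> R) :=
  foldr (fun i acc => if P i then F i + acc else acc) 0 [:: o0; o1; o2; o3; o4; o5].

Lemma sumP (P : 'I_6 -> bool) (F : 'I_6 -> R) :
  (forall i, ~~ P i -> F i = 0) -> \sum_i F i = fsum P F.
Proof.
move=> H; rewrite sum6 /fsum /=.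
have K : forall i acc, (if P i then F i + acc else acc) = F i + acc.
  by move=> i acc; case: ifP => // /negbT /H ->; rewrite add0r.
by rewrite !K addr0 !addrA.
Qed.

Definition wt (n : nat) : nat :=
  match n with 0 => 2 | 1 => 3 | 2 => 1 | 3 => 4 | 4 => 0 | _ => 2 end.
Definition wm (k a b : 'I_6) : bool := Nat.eqb (Nat.add (wt a) (wt b)) (Nat.add (wt k) 2).

Definition w3f (i j l a b c : 'I_6) : R :=
  bf a i * bf b j * bf c l + bf a j * bf b l * bf c i + bf a l * bf b i * bf c j
  - bf a j * bf b i * bf c l - bf a i * bf b l * bf c j - bf a l * bf b j * bf c i.

Ltac ev := cbv beta iota delta [sumf fsum foldr rf cst cst_nat cstb w3f bf solf nat_of_ord Nat.eqb wm wt Nat.add negb].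
Tactic Notation "evin" hyp_list(H) := cbv beta iota delta [sumf fsum foldr rf cst cst_nat cstb w3f bf solf nat_of_ord Nat.eqb wm wt Nat.add negb] in H.

Lemma gensol (D : 'I_6 -> h6t2 R) : lie_bialgebra D -> D o0 = 0 ->
  exists p q s, forall k a b, D k a b = solf p q s k a b.
Proof.
case=> Hco Hlie HD0.
have D0 : forall a b, D o0 a b = 0 by move=> a b; rewrite HD0 mx0E.
have coc' : forall x y a b : 'I_6,
  fsum (fun k => cstb x y k) (fun k => cst R x y k * D k a b) =
  (fsum (fun i => cstb x i a) (fun i => cst R x i a * D y i b)
   + fsum (fun j => cstb x j b) (fun j => D y a j * cst R x j b))
  - (fsum (fun i => cstb y i a) (fun i => cst R y i a * D x i b)
   + fsum (fun j => cstb y j b) (fun j => D x a j * cst R y j b)).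
  move=> x y a b; rewrite -!sumP; try (move: (coc_entry Hco x y a b); exact);
    by move=> i /cstb0 ->; rewrite ?mul0r ?mulr0.
have Z : forall k a b, ~~ wm k a b -> D k a b = 0.
  move=> k a b; move: (coc' o0 k a b).
  (elim/ord6P: k; elim/ord6P: a; elim/ord6P: b; ev; try (by move=> _ []);
    rewrite ?D0 => W _; lra).
have skew := skew Hlie.
have C1 := coc' o1 o2 o0 o5. have C2 := coc' o1 o2 o1 o2. have C3 := coc' o1 o2 o3 o4.
have C4 := coc' o1 o3 o1 o3. have C5 := coc' o1 o4 o0 o2. have C6 := coc' o1 o4 o1 o4.
have C7 := coc' o1 o4 o2 o5. have C8 := coc' o1 o5 o1 o5. have C9 := coc' o2 o3 o1 o5.
have C10 := coc' o2 o3 o2 o3.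
evin C1 C2 C3 C4 C5 C6 C7 C8 C9 C10.
rewrite ?D0 in C1 C2 C3 C4 C5 C6 C7 C8 C9 C10.
have S101 := skew o1 o0 o1. have S115 := skew o1 o1 o5. have S123 := skew o1 o2 o3. have S202 := skew o2 o0 o2. have S214 := skew o2 o1 o4. have S225 := skew o2 o2 o5. have S303 := skew o3 o0 o3. have S311 := skew o3 o1 o1. have S335 := skew o3 o3 o5. have S404 := skew o4 o0 o4. have S422 := skew o4 o2 o2. have S445 := skew o4 o4 o5. have S500 := skew o5 o0 o0. have S505 := skew o5 o0 o5. have S512 := skew o5 o1 o2. have S534 := skew o5 o3 o4. have S555 := skew o5 o5 o5.
clear coc' skew.
have V101 : D o1 o0 o1 = solf (D o2 o5 o2) (D o4 o4 o0) (D o4 o5 o4) o1 o0 o1.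
  by ev; clear -C1 C2 C4 C5 C6 C8 C10 S101 S202; lra.
have V110 : D o1 o1 o0 = solf (D o2 o5 o2) (D o4 o4 o0) (D o4 o5 o4) o1 o1 o0.
  by ev; clear -C1 C2 C4 C5 C6 C8 C10 S202; lra.
have V115 : D o1 o1 o5 = solf (D o2 o5 o2) (D o4 o4 o0) (D o4 o5 o4) o1 o1 o5.
  by ev; clear -C1 C2 C5 C6 C7 C8 S101 S123 S225 S404 S422 S445; lra.
have V123 : D o1 o2 o3 = solf (D o2 o5 o2) (D o4 o4 o0) (D o4 o5 o4) o1 o2 o3.
  by ev; clear -C1 C2 C5 C6 C8 S101 S123 S404; lra.
have V132 : D o1 o3 o2 = solf (D o2 o5 o2) (D o4 o4 o0) (D o4 o5 o4) o1 o3 o2.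
  by ev; clear -C1 C2 C5 C6 C8 S101 S404; lra.
have V151 : D o1 o5 o1 = solf (D o2 o5 o2) (D o4 o4 o0) (D o4 o5 o4) o1 o5 o1.
  by ev; clear -C1 C2 C5 C6 C7 C8 S101 S115 S123 S225 S404 S422 S445; lra.
have V202 : D o2 o0 o2 = solf (D o2 o5 o2) (D o4 o4 o0) (D o4 o5 o4) o2 o0 o2.
  by ev; clear -C1 C2 C4 C5 C6 C8 C10 S202; lra.
have V214 : D o2 o1 o4 = solf (D o2 o5 o2) (D o4 o4 o0) (D o4 o5 o4) o2 o1 o4.
  by ev; clear -C1 C2 C4 C5 C6 C8 C10 S202 S404; lra.
have V220 : D o2 o2 o0 = solf (D o2 o5 o2) (D o4 o4 o0) (D o4 o5 o4) o2 o2 o0.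
  by ev; clear -C1 C2 C4 C5 C6 C8 C10 S202; lra.
have V225 : D o2 o2 o5 = solf (D o2 o5 o2) (D o4 o4 o0) (D o4 o5 o4) o2 o2 o5.
  by ev; clear -S225; lra.
have V241 : D o2 o4 o1 = solf (D o2 o5 o2) (D o4 o4 o0) (D o4 o5 o4) o2 o4 o1.
  by ev; clear -C1 C2 C4 C5 C6 C8 C10 S202 S214 S404; lra.
have V303 : D o3 o0 o3 = solf (D o2 o5 o2) (D o4 o4 o0) (D o4 o5 o4) o3 o0 o3.
  by ev; clear -C4 C5 C10 S101 S123 S202 S404; lra.
have V311 : D o3 o1 o1 = solf (D o2 o5 o2) (D o4 o4 o0) (D o4 o5 o4) o3 o1 o1.
  by ev; clear -S311; lra.
have V330 : D o3 o3 o0 = solf (D o2 o5 o2) (D o4 o4 o0) (D o4 o5 o4) o3 o3 o0.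
  by ev; clear -C4 C5 C10 S101 S123 S202 S303 S404; lra.
have V335 : D o3 o3 o5 = solf (D o2 o5 o2) (D o4 o4 o0) (D o4 o5 o4) o3 o3 o5.
  by ev; clear -C4 C5 C6 C7 C9 C10 S101 S123 S202 S311 S404 S422 S445; lra.
have V353 : D o3 o5 o3 = solf (D o2 o5 o2) (D o4 o4 o0) (D o4 o5 o4) o3 o5 o3.
  by ev; clear -C4 C5 C6 C7 C9 C10 S101 S123 S202 S311 S335 S404 S422 S445; lra.
have V404 : D o4 o0 o4 = solf (D o2 o5 o2) (D o4 o4 o0) (D o4 o5 o4) o4 o0 o4.
  by ev; clear -S404; lra.
have V422 : D o4 o2 o2 = solf (D o2 o5 o2) (D o4 o4 o0) (D o4 o5 o4) o4 o2 o2.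
  by ev; clear -S422; lra.
have V445 : D o4 o4 o5 = solf (D o2 o5 o2) (D o4 o4 o0) (D o4 o5 o4) o4 o4 o5.
  by ev; clear -S445; lra.
have V500 : D o5 o0 o0 = solf (D o2 o5 o2) (D o4 o4 o0) (D o4 o5 o4) o5 o0 o0.
  by ev; clear -S500; lra.
have V505 : D o5 o0 o5 = solf (D o2 o5 o2) (D o4 o4 o0) (D o4 o5 o4) o5 o0 o5.
  by ev; clear -C1 C4 C10 S101 S202; lra.
have V512 : D o5 o1 o2 = solf (D o2 o5 o2) (D o4 o4 o0) (D o4 o5 o4) o5 o1 o2.
  by ev; clear -C1 C4 C8 C10 S101 S202; lra.
have V521 : D o5 o2 o1 = solf (D o2 o5 o2) (D o4 o4 o0) (D o4 o5 o4) o5 o2 o1.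
  by ev; clear -C1 C4 C8 C10 S101 S202 S512; lra.
have V534 : D o5 o3 o4 = solf (D o2 o5 o2) (D o4 o4 o0) (D o4 o5 o4) o5 o3 o4.
  by ev; clear -C3; lra.
have V543 : D o5 o4 o3 = solf (D o2 o5 o2) (D o4 o4 o0) (D o4 o5 o4) o5 o4 o3.
  by ev; clear -C3 S534; lra.
have V550 : D o5 o5 o0 = solf (D o2 o5 o2) (D o4 o4 o0) (D o4 o5 o4) o5 o5 o0.
  by ev; clear -C1 C4 C10 S101 S202 S505; lra.
have V555 : D o5 o5 o5 = solf (D o2 o5 o2) (D o4 o4 o0) (D o4 o5 o4) o5 o5 o5.
  by ev; clear -S555; lra.
exists (D o2 o5 o2), (D o4 o4 o0), (D o4 o5 o4) => k a b.
have := Z k a b.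
(elim/ord6P: k; elim/ord6P: a; elim/ord6P: b; first [ by move=> _; assumption
  | by move=> _; ev | by ev => /(_ isT) ]).
Qed.

Lemma ad2_lin (x : h6 R) (t : h6t2 R) : ad2 x t = \sum_k x 0 k *: ad2 (bas R k) t.
Proof.
apply/matrixP => a b; rewrite summxE.
rewrite (eq_bigr (fun k => x 0 k * ad2 (bas R k) t a b)); last by move=> k _; rewrite mxscaleE.
rewrite ad2E !sumfE /sumf !ad2E !sumfE /sumf !admB !admE !sumfE /sumf /=.
ring.
Qed.

Lemma part1 (D : 'I_6 -> h6t2 R) : lie_bialgebra D -> D o0 = 0 ->
  exists c1 c2 : R, forall x : h6 R, delta_of D x = ad2 x (r_of c1 c2).
Proof.
move=> HL HD0; have [p [q [s H]]] := gensol HL HD0.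
have J := jac HL.2 o0 o2 o3 o1.
rewrite !sumfE /sumf !H in J; evin J.
have Hq : q = 0.
  have : q * q = 0 by nra.
  by move/eqP; rewrite mulf_eq0 orbb => /eqP.
subst q; exists (- s / 2), (p - s / 2) => x.
rewrite ad2_lin /delta_of; apply: eq_bigr => k _; congr (_ *: _).
apply/matrixP => a b; rewrite H ad2rE !sumfE /sumf.
by elim/ord6P: k; elim/ord6P: a; elim/ord6P: b; ev; lra.
Qed.

Lemma w3E i j l a b c : wedge3 (bas R i) (bas R j) (bas R l) (a, b, c) = w3f i j l a b c.
Proof. by rewrite /wedge3 ffunE /tens3 !ffunE /= !basE'. Qed.

Lemma sum2P (G : 'I_6 -> 'I_6 -> R) (P : 'I_6 -> 'I_6 -> bool) :
  (forall i k, ~~ P i k -> G i k = 0) ->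
  \sum_i \sum_k G i k = sumf (fun i => fsum (P i) (G i)).
Proof.
move=> H; have E : forall i, \sum_k G i k = fsum (P i) (G i).
  by move=> i; apply: sumP => k /H.
by rewrite sumfE /sumf !E.
Qed.

Lemma admP (x : h6 R) i k : adm x i k = fsum (fun m => cstb m i k) (fun m => x 0 m * cst R m i k).
Proof. by rewrite admE; apply: sumP => m /cstb0 ->; rewrite mulr0. Qed.

Lemma schE c1 c2 a b c : schouten (r_of c1 c2) (a, b, c) =
  sumf (fun i => fsum (fun k => cstb i k a) (fun k => rf c1 c2 i b * rf c1 c2 k c * cst R i k a))
  + sumf (fun j => fsum (fun k => cstb j k b) (fun k => rf c1 c2 a j * rf c1 c2 k c * cst R j k b))
  + sumf (fun j => fsum (fun l => cstb j l c) (fun l => rf c1 c2 a j * rf c1 c2 b l * cst R j l c)).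
Proof.
rewrite ffunE /=.
rewrite (@sum2P (fun i k => r_of c1 c2 i b * r_of c1 c2 k c * cst R i k a) (fun i k => cstb i k a));
  last by move=> i k /cstb0 ->; rewrite mulr0.
rewrite (@sum2P (fun j k => r_of c1 c2 a j * r_of c1 c2 k c * cst R j k b) (fun j k => cstb j k b));
  last by move=> i k /cstb0 ->; rewrite mulr0.
rewrite (@sum2P (fun j l => r_of c1 c2 a j * r_of c1 c2 b l * cst R j l c) (fun j l => cstb j l c));
  last by move=> i k /cstb0 ->; rewrite mulr0.
by rewrite /sumf /fsum /= !rE'.
Qed.

Lemma ffunW (k : R) (x y z : h6 R) t :
  [ffun t => k * wedge3 x y z t] t = k * wedge3 x y z t.
Proof. exact: ffunE. Qed.

Lemma ad3W (x : h6 R) k i j l a b c :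
  ad3 x [ffun t => k * wedge3 (bas R i) (bas R j) (bas R l) t] (a, b, c) =
  sumf (fun m => fsum (fun n => cstb n m a) (fun n => x 0 n * cst R n m a) * (k * w3f i j l m b c))
  + sumf (fun m => fsum (fun n => cstb n m b) (fun n => x 0 n * cst R n m b) * (k * w3f i j l a m c))
  + sumf (fun m => fsum (fun n => cstb n m c) (fun n => x 0 n * cst R n m c) * (k * w3f i j l a b m)).
Proof. by rewrite ffunE /= !sumfE /sumf !ffunW !w3E !admP. Qed.

Lemma partA c1 c2 : schouten (r_of c1 c2) = [ffun t => - c2 ^+ 2 * wedge3 (eAp R) (eAm R) (eM R) t].
Proof.
apply/ffunP => [[[a b] c]]; rewrite schE ffunW !eE w3E.
by elim/ord6P: a; elim/ord6P: b; elim/ord6P: c; ev; ring.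
Qed.

Lemma partI c2 (x : h6 R) :
  ad3 x [ffun t => - c2 ^+ 2 * wedge3 (eAp R) (eAm R) (eM R) t] = [ffun => 0].
Proof.
rewrite !eE; apply/ffunP => [[[a b] c]]; rewrite ad3W [RHS]ffunE.
by elim/ord6P: a; elim/ord6P: b; elim/ord6P: c; ev; ring.
Qed.

Lemma partB c2 :
  [ffun t => - c2 ^+ 2 * wedge3 (eAp R) (eAm R) (eM R) t] = [ffun => 0] <-> c2 = 0.
Proof.
split.
  move/ffunP/(_ (o1, o2, o5)); rewrite ffunW !eE w3E ffunE; ev => E.
  have : - c2 ^+ 2 = 0 by rewrite -[RHS]E; ring.
  by move/eqP; rewrite oppr_eq0 sqrf_eq0 => /eqP.
by move=> ->; apply/ffunP => t; rewrite ffunW [RHS]ffunE; ring.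
Qed.

Lemma part3 c1 c2 :
     [/\ schouten (r_of c1 c2) = [ffun t => - c2 ^+ 2 * wedge3 (eAp R) (eAm R) (eM R) t],
         (schouten (r_of c1 c2) = [ffun => 0] <-> c2 = 0) &
         ((schouten (r_of c1 c2) <> [ffun => 0] /\
           forall x : h6 R, ad3 x (schouten (r_of c1 c2)) = [ffun => 0])
          <-> c2 <> 0)].
Proof.
rewrite partA; split => //; first exact: partB.
split; first by case=> H _ Hc; apply: H; apply/partB.
move=> Hc; split; first by move/partB.
exact: partI.
Qed.

Lemma part2 c1 c2 :
     [/\ ad2 (eN R) (r_of c1 c2) = 0 /\ ad2 (eM R) (r_of c1 c2) = 0,
         ad2 (eAp R) (r_of c1 c2) = - (c1 + c2) *: wedge (eAp R) (eM R),
         ad2 (eAm R) (r_of c1 c2) = (c1 - c2) *: wedge (eAm R) (eM R),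
         ad2 (eBp R) (r_of c1 c2) = - (2 * c1) *: wedge (eBp R) (eM R) &
         ad2 (eBm R) (r_of c1 c2) = (2 * c1) *: wedge (eBm R) (eM R)].
Proof.
rewrite !eE; split; try split; apply/matrixP => a b.
all: by elim/ord6P: a; elim/ord6P: b; rewrite ad2rE !sum6 ?mxscaleE ?mx0E ?wedgeB; ev; ring.
Qed.

End S.

Theorem mainTheorem1 (R : realFieldType) :
  (forall D : 'I_6 -> h6t2 R, lie_bialgebra D ->
     (delta_of D (eN R) = 0 <->
      exists c1 c2 : R, forall x : h6 R, delta_of D x = ad2 x (r_of c1 c2)))
  /\
  (forall c1 c2 : R,
     [/\ ad2 (eN R) (r_of c1 c2) = 0 /\ ad2 (eM R) (r_of c1 c2) = 0,
         ad2 (eAp R) (r_of c1 c2) = - (c1 + c2) *: wedge (eAp R) (eM R),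
         ad2 (eAm R) (r_of c1 c2) = (c1 - c2) *: wedge (eAm R) (eM R),
         ad2 (eBp R) (r_of c1 c2) = - (2 * c1) *: wedge (eBp R) (eM R) &
         ad2 (eBm R) (r_of c1 c2) = (2 * c1) *: wedge (eBm R) (eM R)])
  /\
  (forall c1 c2 : R,
     [/\ schouten (r_of c1 c2) = [ffun t => - c2 ^+ 2 * wedge3 (eAp R) (eAm R) (eM R) t],
         (schouten (r_of c1 c2) = [ffun => 0] <-> c2 = 0) &
         ((schouten (r_of c1 c2) <> [ffun => 0] /\
           forall x : h6 R, ad3 x (schouten (r_of c1 c2)) = [ffun => 0])
          <-> c2 <> 0)]).
Proof.
split.
  move=> D HL; split.
    by move=> H0; apply: part1 => //; rewrite eNE delta_bas in H0.
  case=> c1 [c2 H]; rewrite H.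
  by case: (part2 c1 c2) => [[-> _] _ _ _ _].
split; [exact: part2 | exact: part3].
Qed.
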